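(* Let $A$ be a hyperoperator on $\mathbb{R}^n$ on the complex Banach space $X$, let $f\in\mathcal{E}(\mathbb{R}^n,\mathbb{R}^m)$, and assume $f(a)x=0$ for all $x\in D_A$. Then $\sigma(A)\subset f^{-1}(0)$.
   Context: $X$ is a complex Banach space, $L(X)$ the bounded operators. $\mathcal{D}(\mathbb{R}^n)=C_c^\infty(\mathbb{R}^n)$ (complex-valued); $\mathcal{E}(\mathbb{R}^n,\mathbb{R}^m)$ the smooth maps $\mathbb{R}^n\to\mathbb{R}^m$. A hyperoperator on $\mathbb{R}^n$ is a linear map $A:\mathcal{D}(\mathbb{R}^n)\to L(X)$, continuous ($A(\phi_j)\to0$ in operator norm when $\phi_j\to0$ in $\mathcal{D}(\mathbb{R}^n)$), multiplicative, with (i) $D_A:=\bigcup_\phi\operatorname{Im}A(\phi)$ dense and (ii) $\bigcap_\phi\operatorname{Ker}A(\phi)=\{0\}$. For $x\in D_A$ written $x=A(\phi)y$, $f(a)x:=A(f\phi)y$ (well defined, componentwise). $\sigma(A)$ is the support of $A$ as an $L(X)$-valued distribution. *)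

(* Defs.v *)
From HB Require Import structures.
From mathcomp Require Import all_boot all_order all_algebra.
From mathcomp Require Import all_classical all_reals all_analysis.
From mathcomp.real_closed Require Import complex.
Set Implicit Arguments. Unset Strict Implicit. Unset Printing Implicit Defensive.
Import Order.TTheory GRing.Theory Num.Theory.
Import numFieldNormedType.Exports.
Local Open Scope classical_set_scope.
Local Open Scope ring_scope.
Local Open Scope complex_scope.

Section Hyper.
Variables (R : realType) (n : nat).

Definition ebase (i : 'I_n) : 'rV[R]_n := delta_mx 0 i.

Fixpoint dpart (s : seq 'I_n) (g : 'rV[R]_n -> R) : 'rV[R]_n -> R :=
  match s with
  | [::] => g
  | i :: s' => fun x => 'D_(ebase i) (dpart s' g) x
  end.

Definition smooth (g : 'rV[R]_n -> R) : Prop :=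
  forall s : seq 'I_n,
    continuous (dpart s g) /\
    forall (i : 'I_n) (x : 'rV[R]_n), derivable (dpart s g) x (ebase i).

Definition fsupp (phi : 'rV[R]_n -> R[i]) : set 'rV[R]_n :=
  closure [set x | phi x != 0].

Definition test_fun (phi : 'rV[R]_n -> R[i]) : Prop :=
  smooth (fun x => complex.Re (phi x)) /\ smooth (fun x => complex.Im (phi x)) /\
  compact (fsupp phi).

Definition D_cvg0 (phi : nat -> 'rV[R]_n -> R[i]) : Prop :=
  (forall j, test_fun (phi j)) /\
  (exists K : set 'rV[R]_n, compact K /\ forall j, fsupp (phi j) `<=` K) /\
  (forall (s : seq 'I_n) (e : R), 0 < e ->
     \forall j \near \oo, forall x : 'rV[R]_n,
        `|dpart s (fun y => complex.Re (phi j y)) x| < e /\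
        `|dpart s (fun y => complex.Im (phi j y)) x| < e).

Variable X : completeNormedModType R[i].

Definition bounded_op (T : X -> X) : Prop :=
  (forall (c : R[i]) (x y : X), T (c *: x + y) = c *: T x + T y) /\
  exists M : R, forall x, `|T x| <= M%:C * `|x|.

Definition hyperoperator (A : ('rV[R]_n -> R[i]) -> X -> X) : Prop :=
  (forall phi, test_fun phi -> bounded_op (A phi)) /\
  (forall (c : R[i]) phi psi, test_fun phi -> test_fun psi ->
     A (fun x => c * phi x + psi x) = (fun y => c *: A phi y + A psi y)) /\
  (forall phi : nat -> 'rV[R]_n -> R[i], D_cvg0 phi ->
     forall e : R, 0 < e ->
       \forall j \near \oo, forall y : X, `|A (phi j) y| <= e%:C * `|y|) /\
  (forall phi psi, test_fun phi -> test_fun psi ->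
     A (fun x => phi x * psi x) = A phi \o A psi) /\
  closure [set x : X | exists phi y, test_fun phi /\ x = A phi y] = setT /\
  (forall x : X, (forall phi, test_fun phi -> A phi x = 0) -> x = 0).

Definition DA (A : ('rV[R]_n -> R[i]) -> X -> X) : set X :=
  [set x | exists phi y, test_fun phi /\ x = A phi y].

(* sigma(A): support of A as an L(X)-valued distribution, i.e. the
   complement of the largest open set on which A vanishes *)
Definition hsupport (A : ('rV[R]_n -> R[i]) -> X -> X) : set 'rV[R]_n :=
  [set p | forall U : set 'rV[R]_n, open U -> U p ->
     exists phi, test_fun phi /\ fsupp phi `<=` U /\ exists y, A phi y != 0].

End Hyper.

Definition smooth_map (R : realType) (n m : nat)
  (f : 'rV[R]_n -> 'rV[R]_m) : Prop :=
  forall i : 'I_m, smooth (fun x => f x 0 i).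

(* Main.v *)
Set Implicit Arguments. Unset Strict Implicit.
Require Import Defs.
From HB Require Import structures.
From mathcomp Require Import all_boot all_order all_algebra.
From mathcomp Require Import all_classical all_reals all_analysis.
From mathcomp.real_closed Require Import complex.
From mathcomp Require Import ring.
Import Order.TTheory GRing.Theory Num.Theory.
Import numFieldNormedType.Exports.
Local Open Scope classical_set_scope.
Local Open Scope ring_scope.

Section Calc.
Variables (R : realType) (n : nat).
Implicit Types (g u v : 'rV[R]_n -> R) (W : set 'rV[R]_n).

Lemma dpart_cat s t g : dpart (s ++ t) g = dpart s (dpart t g).
Proof. by elim: s => //= i s ->. Qed.

Lemma dpart_loc W g1 g2 : open W -> (forall x, W x -> g1 x = g2 x) ->
  forall s x, W x -> dpart s g1 x = dpart s g2 x.
Proof.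
move=> oW E; elim=> [|i s IH] x Wx /=; first exact: E.
apply: near_eq_derive; apply: filterS (oW x Wx) => y Wy; exact: IH.
Qed.

Definition Ps W (N : nat) g := forall s : seq 'I_n, (size s <= N)%N ->
  forall x, W x -> {for x, continuous (dpart s g)} /\
    forall i, derivable (dpart s g) x (ebase R i).

Lemma Ps_transfer W N g1 g2 : open W -> (forall x, W x -> g1 x = g2 x) ->
  Ps W N g2 -> Ps W N g1.
Proof.
move=> oW E P s hs x Wx.
have L : \forall y \near x, dpart s g2 y = dpart s g1 y.
  by apply: filterS (oW x Wx) => y Wy; rewrite (dpart_loc oW E).
have [c d] := P s hs x Wx; split.
- move: c; rewrite /prop_for /continuous_at => c; rewrite (dpart_loc oW E) //.
  exact: (cvg_trans (@near_eq_cvg _ _ _ _ (dpart s g2) (dpart s g1) L) c).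
- move=> i; exact: (@near_eq_derivable _ _ _ (dpart s g2) (dpart s g1) x _ L (d i)).
Qed.

Lemma Ps_weak W N M g : (M <= N)%N -> Ps W N g -> Ps W M g.
Proof. by move=> MN P s hs; apply: P; apply: leq_trans hs MN. Qed.

Lemma Ps_succ W N g : Ps W N.+1 g -> forall i, Ps W N (dpart [:: i] g).
Proof.
move=> P i s hs x Wx; rewrite -dpart_cat cats1; apply: P => //.
by rewrite size_rcons.
Qed.

Lemma Ps_succ' W N g : Ps W 0 g -> (forall i, Ps W N (dpart [:: i] g)) ->
  Ps W N.+1 g.
Proof.
move=> P0 P s; case/lastP: s => [|s i] hs x Wx; first exact: P0.
rewrite -cats1 dpart_cat; apply: P => //.
by move: hs; rewrite size_rcons.
Qed.

Lemma Ps_D W N u v : open W -> Ps W N u -> Ps W N v -> Ps W N (u + v).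
Proof.
move=> oW; elim: N u v => [|N IH] u v Pu Pv.
  case=> // _ x Wx /=; have [cu du] := Pu [::] isT x Wx;
  have [cv dv] := Pv [::] isT x Wx; split.
  - rewrite /prop_for /continuous_at in cu cv *; exact: cvgD cu cv.
  - by move=> i; apply: derivableD.
apply: Ps_succ'.
  apply: Ps_weak (IH _ _ (Ps_weak _ Pu) (Ps_weak _ Pv)) => //.
move=> i; apply: (@Ps_transfer _ _ _ (dpart [::i] u + dpart [::i] v)) => //.
  move=> x Wx /=; rewrite deriveD //.
  - exact: (Pu [::] isT x Wx).2.
  - exact: (Pv [::] isT x Wx).2.
by apply: IH; apply: Ps_succ.
Qed.

Lemma Ps_M W N u v : open W -> Ps W N u -> Ps W N v -> Ps W N (u * v).
Proof.
move=> oW; elim: N u v => [|N IH] u v Pu Pv.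
  case=> // _ x Wx /=; have [cu du] := Pu [::] isT x Wx;
  have [cv dv] := Pv [::] isT x Wx; split.
  - rewrite /prop_for /continuous_at in cu cv *; exact: cvgM cu cv.
  - by move=> i; apply: derivableM.
apply: Ps_succ'.
  apply: Ps_weak (IH _ _ (Ps_weak _ Pu) (Ps_weak _ Pv)) => //.
move=> i; apply: (@Ps_transfer _ _ _
   (u * dpart [::i] v + v * dpart [::i] u)) => //.
  move=> x Wx /=; rewrite deriveM //.
  - exact: (Pu [::] isT x Wx).2.
  - exact: (Pv [::] isT x Wx).2.
apply: Ps_D => //; apply: IH.
- exact: Ps_weak Pu.
- exact: Ps_succ.
- exact: Ps_weak Pv.
- exact: Ps_succ.
Qed.

Lemma Ps_cst W N (c : R) : open W -> Ps W N (cst c).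
Proof.
move=> oW; elim: N c => [|N IH] c.
  case=> // _ x Wx /=; split; first exact: cst_continuous.
  by move=> i; apply: derivable_cst.
apply: Ps_succ'; first by apply: Ps_weak (IH c).
move=> i; apply: (@Ps_transfer _ _ _ (cst 0)) => // x Wx /=.
exact: derive_cst.
Qed.

Lemma Ps_V W N h : open W -> (forall N, Ps W N h) ->
  (forall x, W x -> h x != 0) -> Ps W N (fun x => (h x)^-1).
Proof.
move=> oW Ph h0; elim: N => [|N IH].
  case=> // _ x Wx /=; have [ch dh] := Ph 0%N [::] isT x Wx; split.
  - rewrite /prop_for /continuous_at in ch *; exact: cvgV (h0 x Wx) ch.
  - move=> i; exact: derivableV (h0 x Wx) (dh i).
apply: Ps_succ'; first by apply: Ps_weak IH.
move=> i; apply: (@Ps_transfer _ _ _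
   (cst (-1) * (dpart [::i] h * ((fun x => (h x)^-1) * (fun x => (h x)^-1))))) => //.
  move=> x Wx /=; rewrite deriveV ?h0 //; last exact: (Ph 0%N [::] isT x Wx).2.
  rewrite -exprVn expr2 /=.
  change (- ((h x)^-1 / h x) * 'D_(ebase R i) h x = (-1) * ('D_(ebase R i) h x * ((h x)^-1 * (h x)^-1))).
  ring.
apply: Ps_M => //; first exact: Ps_cst.
apply: Ps_M => //; first exact: Ps_succ.
exact: Ps_M.
Qed.

Lemma smooth_Ps W N g : smooth g -> Ps W N g.
Proof. by move=> sg s _ x _; have [c d] := sg s; split; [exact: c | move=> i; exact: d]. Qed.

Lemma Ps_smooth g : (forall N, Ps setT N g) -> smooth g.
Proof.
move=> P s; split.
- move=> x; exact: (P (size s) s (leqnn _) x I).1.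
- move=> i x; exact: (P (size s) s (leqnn _) x I).2.
Qed.

Lemma Ps_glue W V N g : Ps W N g -> Ps V N g -> (forall x, W x \/ V x) ->
  Ps setT N g.
Proof.
move=> PW PV c s hs x _; case: (c x) => [Wx|Vx]; [exact: PW | exact: PV].
Qed.

Lemma smooth_div W u h : open W -> smooth u -> smooth h ->
  (forall x, W x -> h x != 0) -> closure [set x | u x != 0] `<=` W ->
  smooth (u * (fun x => (h x)^-1)).
Proof.
move=> oW su sh h0 sub; apply: Ps_smooth => N.
set V := ~` closure [set x | u x != 0].
have oV : open V by apply: closed_openC; exact: closed_closure.
apply: (@Ps_glue W V).
- apply: Ps_M => //; first exact: smooth_Ps.
  apply: Ps_V => // M; exact: smooth_Ps.
- apply: (@Ps_transfer _ _ _ (cst 0)) => //; last exact: Ps_cst.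
  move=> x Vx; change (u x * (h x)^-1 = 0).
  have -> : u x = 0.
    case: (eqVneq (u x) 0) => // nz; exfalso; apply: Vx.
    by apply: (@subset_closure _ [set x | u x != 0]); rewrite /= nz.
  by rewrite mul0r.
- move=> x; case: (pselect (closure [set x | u x != 0] x)) => H.
  + by left; apply: sub.
  + by right.
Qed.

End Calc.

Local Open Scope complex_scope.

Theorem corollary5p5 (R : realType) (n m : nat) (X : completeNormedModType R[i])
  (A : ('rV[R]_n -> R[i]) -> X -> X) (f : 'rV[R]_n -> 'rV[R]_m) :
  hyperoperator A -> smooth_map f ->
  (forall (phi : 'rV[R]_n -> R[i]) (y : X), test_fun phi ->
     forall i : 'I_m, A (fun x => (f x 0 i)%:C * phi x) y = 0) ->
  hsupport A `<=` f @^-1` [set 0].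
Proof.
move=> _ hf Hyp p Hp /=.
apply/rowP => j; rewrite mxE.
apply/eqP; apply/negP => hne.
set h := fun x => f x 0 j.
have hs : smooth h := hf j.
have oW : open [set x | h x != 0].
  have := (continuousP h).1 (hs [::]).1 [set r : R | r != 0] (@open_neq _ 0). by [].
have hne' : h p != 0 by apply/negP.
have [phi [tphi [sub [y Ay]]]] := Hp _ oW hne'.
have phi0 : forall x, h x = 0 -> phi x = 0.
  move=> x hx; case: (eqVneq (phi x) 0) => // nz.
  by have := sub x (@subset_closure _ [set x | phi x != 0] x nz); rewrite /= hx eqxx.
set psi := fun x => phi x * ((h x)^-1)%:C.
have RePsi : (fun x => complex.Re (psi x)) =
   (fun x => complex.Re (phi x)) * (fun x => (h x)^-1).
  apply: funext => x.
  change (complex.Re (phi x * ((h x)^-1)%:C) = complex.Re (phi x) * (h x)^-1).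
  case: (phi x) => a b /=; ring.
have ImPsi : (fun x => complex.Im (psi x)) =
   (fun x => complex.Im (phi x)) * (fun x => (h x)^-1).
  apply: funext => x.
  change (complex.Im (phi x * ((h x)^-1)%:C) = complex.Im (phi x) * (h x)^-1).
  case: (phi x) => a b /=; ring.
have h0 : forall x, [set x | h x != 0] x -> h x != 0 by [].
have tpsi : test_fun psi.
  split; [|split].
  - rewrite RePsi; apply: (smooth_div oW) => //; first exact: tphi.1.
    apply: subset_trans sub; apply: closureS => x /= nz.
    by apply/negP => /eqP e; move: nz; rewrite e eqxx.
  - rewrite ImPsi; apply: (smooth_div oW) => //; first exact: tphi.2.1.
    apply: subset_trans sub; apply: closureS => x /= nz.
    by apply/negP => /eqP e; move: nz; rewrite e eqxx.
  - apply: (subclosed_compact _ tphi.2.2); first exact: closed_closure.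
    apply: closureS => x /= nz; apply/negP => /eqP e; move: nz.
    by rewrite /psi e mul0r eqxx.
have := Hyp psi y tpsi j.
have -> : (fun x => (f x 0 j)%:C * psi x) = phi.
  apply: funext => x; rewrite /psi.
  case: (eqVneq (h x) 0) => hx; first by rewrite phi0 // !(mul0r, mulr0).
  by rewrite mulrCA -rmorphM mulfV // rmorph1 mulr1.
by move/eqP; rewrite (negbTE Ay).
Qed.
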